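(* The set $\mathbb F_0$ of origami numbers is a subfield of $\mathbb R$, and it is closed under the operation $\alpha\mapsto\sqrt{1+\alpha^2}$: if $\alpha\in\mathbb F_0$ then $\sqrt{1+\alpha^2}\in\mathbb F_0$.
   Context: An origami pair is a pair $(\mathcal P,\mathcal L)$ where $\mathcal P\subset\mathbb R^2$ is a set of points and $\mathcal L$ is a collection of lines in $\mathbb R^2$ such that: (i) the intersection point of any two non-parallel lines of $\mathcal L$ lies in $\mathcal P$; (ii) for any two distinct points of $\mathcal P$, the line through them is in $\mathcal L$; (iii) for any two distinct points of $\mathcal P$, the perpendicular bisector of the segment joining them is in $\mathcal L$; (iv) if $L_1,L_2\in\mathcal L$, then every line equidistant from $L_1$ and $L_2$ is in $\mathcal L$ (the midline if they are parallel, the angle bisectors if they intersect); (v) if $L_1,L_2\in\mathcal L$, then the mirror reflection of $L_2$ across $L_1$ is in $\mathcal L$. A set $\mathcal P\subset\mathbb R^2$ is closed under origami constructions if there is a collection of lines $\mathcal L$ with $(\mathcal P,\mathcal L)$ an origami pair. The set of origami constructible points is $\mathcal P_0=\bigcap\{\mathcal P : (0,0),(0,1)\in\mathcal P \text{ and } \mathcal P \text{ is closed under origami constructions}\}$. The set of origami numbers is $\mathbb F_0=\{\alpha\in\mathbb R : \exists v_1,v_2\in\mathcal P_0,\ |\alpha|=\operatorname{dist}(v_1,v_2)\}$. *)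

(* Defs.v *)
From Stdlib Require Import Reals.
Open Scope R_scope.

Definition point := (R * R)%type.
Definition pset := point -> Prop.

Definition line_eq (a b c : R) : pset := fun p => a * fst p + b * snd p = c.

Definition is_line (S : pset) : Prop :=
  exists a b c, (a <> 0 \/ b <> 0) /\ forall p, S p <-> line_eq a b c p.

Definition same_set (S T : pset) : Prop := forall p, S p <-> T p.

Definition inL (L : pset -> Prop) (S : pset) : Prop :=
  exists T, L T /\ same_set T S.

Definition dist (p q : point) : R :=
  sqrt ((fst p - fst q) ^ 2 + (snd p - snd q) ^ 2).

Definition dist_line (a b c : R) (p : point) : R :=
  Rabs (a * fst p + b * snd p - c) / sqrt (a ^ 2 + b ^ 2).

Definition line_through (p q : point) : pset :=
  fun x => (fst q - fst p) * (snd x - snd p) = (snd q - snd p) * (fst x - fst p).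

Definition perp_bisector (p q : point) : pset :=
  fun x => dist x p = dist x q.

Definition reflect (a b c : R) (p : point) : point :=
  let t := 2 * (a * fst p + b * snd p - c) / (a ^ 2 + b ^ 2) in
  (fst p - t * a, snd p - t * b).

Definition origami_pair (P : pset) (L : pset -> Prop) : Prop :=
  (forall S, L S -> is_line S) /\
  (forall S1 S2 p, L S1 -> L S2 -> ~ same_set S1 S2 -> S1 p -> S2 p -> P p) /\
  (forall p q, P p -> P q -> p <> q -> inL L (line_through p q)) /\
  (forall p q, P p -> P q -> p <> q -> inL L (perp_bisector p q)) /\
  (forall a1 b1 c1 a2 b2 c2 M,
      (a1 <> 0 \/ b1 <> 0) -> (a2 <> 0 \/ b2 <> 0) ->
      inL L (line_eq a1 b1 c1) -> inL L (line_eq a2 b2 c2) ->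
      ~ same_set (line_eq a1 b1 c1) (line_eq a2 b2 c2) ->
      is_line M ->
      (forall p, M p -> dist_line a1 b1 c1 p = dist_line a2 b2 c2 p) ->
      inL L M) /\
  (forall a b c S2, (a <> 0 \/ b <> 0) ->
      inL L (line_eq a b c) -> L S2 ->
      inL L (fun x => exists p, S2 p /\ x = reflect a b c p)).

Definition origami_closed (P : pset) : Prop :=
  exists L, origami_pair P L.

Definition P0 : pset :=
  fun v => forall P, P (0, 0) -> P (0, 1) -> origami_closed P -> P v.

Definition F0 (alpha : R) : Prop :=
  exists v1 v2, P0 v1 /\ P0 v2 /\ Rabs alpha = dist v1 v2.

(* Main.v *)
Require Import Defs.
From Stdlib Require Import Reals Lra Psatz Classical.
Open Scope R_scope.

Lemma refl_invol a b c z : a^2 + b^2 <> 0 -> reflect a b c (reflect a b c z) = z.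
Proof. intros Hn; destruct z as [z1 z2]; unfold reflect; cbn. f_equal; field; auto; lra. Qed.

Lemma refl_h m z : reflect 0 1 m z = (fst z, 2*m - snd z).
Proof. destruct z; unfold reflect; cbn; f_equal; field. Qed.
Lemma refl_v m z : reflect 1 0 m z = (2*m - fst z, snd z).
Proof. destruct z; unfold reflect; cbn; f_equal; field. Qed.
Lemma refl_D z : reflect 1 (-1) 0 z = (snd z, fst z).
Proof. destruct z; unfold reflect; cbn; f_equal; field. Qed.

Lemma nz2 a b : a <> 0 \/ b <> 0 -> a^2 + b^2 <> 0.
Proof. intros [H|H]; intro E; apply H; nra. Qed.

Lemma line_alg d1 d2 a b u v : (d1 <> 0 \/ d2 <> 0) -> (a <> 0 \/ b <> 0) ->
  a*d1 + b*d2 = 0 -> (d1 * v = d2 * u <-> a*u + b*v = 0).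
Proof.
  intros Hd Hab Hp. destruct (Req_dec d1 0) as [E|E].
  - subst d1. assert (d2 <> 0) by (destruct Hd; lra).
    assert (b = 0). { apply (Rmult_eq_reg_r d2); lra. } subst b.
    assert (a <> 0) by (destruct Hab; lra).
    split; intro K.
    + assert (u = 0). { apply (Rmult_eq_reg_l d2); lra. } subst; lra.
    + assert (u = 0). { apply (Rmult_eq_reg_l a); lra. } subst; lra.
  - split; intro K.
    + apply (Rmult_eq_reg_l d1); try assumption.
      replace (d1 * (a*u+b*v)) with (u*(a*d1+b*d2) + b*(d1*v - d2*u)) by ring. rewrite Hp, K. ring.
    + assert (b <> 0). { intro Hb; subst b. destruct Hab as [Ha|Ha]; [|lra].
        apply Ha. apply (Rmult_eq_reg_r d1); lra. }
      apply (Rmult_eq_reg_l b); try assumption.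
      replace (b * (d1*v)) with (d1*(a*u+b*v) - u*(a*d1+b*d2) + b*d2*u) by ring. rewrite Hp, K. ring.
Qed.

Definition Ln (L : pset -> Prop) a b c := inL L (line_eq a b c).

Lemma Ln_ext L a b c a' b' c' : Ln L a b c ->
  (forall z, line_eq a b c z <-> line_eq a' b' c' z) -> Ln L a' b' c'.
Proof. intros [T [HT HS]] E. exists T; split; auto. intro p; rewrite (HS p); apply E. Qed.

Lemma meet P L a1 b1 c1 a2 b2 c2 x y : origami_pair P L ->
  Ln L a1 b1 c1 -> Ln L a2 b2 c2 -> a1*b2 - a2*b1 <> 0 ->
  a1*x + b1*y = c1 -> a2*x + b2*y = c2 -> P (x,y).
Proof.
  intros [HL [Hi _]] [T1 [HT1 HS1]] [T2 [HT2 HS2]] Hd E1 E2.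
  apply (Hi T1 T2); auto.
  - intro Hs. assert (K : line_eq a2 b2 c2 (x + b1, y - a1)).
    { apply HS2, Hs, HS1. unfold line_eq; cbn. lra. }
    unfold line_eq in K; cbn in K. apply Hd. nra.
  - apply HS1. unfold line_eq; cbn; auto.
  - apply HS2. unfold line_eq; cbn; auto.
Qed.

Lemma thru P L p q a b c : origami_pair P L -> P p -> P q -> p <> q ->
  a * fst p + b * snd p = c -> a * fst q + b * snd q = c -> (a <> 0 \/ b <> 0) ->
  Ln L a b c.
Proof.
  intros [HL [Hi [Hii _]]] Hp Hq Hpq E1 E2 Hab.
  destruct (Hii p q Hp Hq Hpq) as [T [HT HS]]. exists T; split; auto.
  intro z. rewrite (HS z). destruct p as [p1 p2]; destruct q as [q1 q2]; destruct z as [z1 z2].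
  unfold line_through, line_eq in *; cbn in *.
  assert (Hd : q1 - p1 <> 0 \/ q2 - p2 <> 0).
  { destruct (Req_dec q1 p1); [|left; lra]. destruct (Req_dec q2 p2); [|right; lra].
    subst; tauto. }
  pose proof (line_alg (q1-p1) (q2-p2) a b (z1-p1) (z2-p2) Hd Hab ltac:(lra)).
  split; intro K.
  - assert (a*(z1-p1) + b*(z2-p2) = 0) by (apply H; lra). lra.
  - assert ((q1 - p1) * (z2 - p2) = (q2 - p2) * (z1 - p1)) by (apply H; lra). lra.
Qed.

Lemma perp P L p q : origami_pair P L -> P p -> P q -> p <> q ->
  Ln L (2*(fst q - fst p)) (2*(snd q - snd p)) (fst q^2 + snd q^2 - fst p^2 - snd p^2).
Proof.
  intros [HL [Hi [Hii [Hiii _]]]] Hp Hq Hpq.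
  destruct (Hiii p q Hp Hq Hpq) as [T [HT HS]]. exists T; split; auto.
  intro z. rewrite (HS z). destruct p as [p1 p2]; destruct q as [q1 q2]; destruct z as [z1 z2].
  unfold perp_bisector, Defs.dist, line_eq; cbn.
  split; intro K.
  - apply sqrt_inj in K; [cbn in *; nra | apply Rplus_le_le_0_compat; apply pow2_ge_0 | apply Rplus_le_le_0_compat; apply pow2_ge_0].
  - f_equal. cbn [fst snd] in *. nra.
Qed.

Lemma refl P L a b c a2 b2 c2 A B C : origami_pair P L -> (a <> 0 \/ b <> 0) ->
  Ln L a b c -> Ln L a2 b2 c2 ->
  (forall z, line_eq A B C z <-> line_eq a2 b2 c2 (reflect a b c z)) -> Ln L A B C.
Proof.
  intros [HL [Hi [Hii [Hiii [Hiv Hv]]]]] Hab Hm [T [HT HS]] E.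
  destruct (Hv a b c T Hab Hm HT) as [U [HU HUS]]. exists U; split; auto.
  intro z. rewrite (HUS z), (E z). rewrite <- (HS (reflect a b c z)). split.
  - intros [p [Tp ->]]. rewrite refl_invol; auto. apply nz2; auto.
  - intro K. exists (reflect a b c z). split; auto. rewrite refl_invol; auto. apply nz2; auto.
Qed.

Lemma bis P L a1 b1 c1 a2 b2 c2 A B C : origami_pair P L ->
  (a1 <> 0 \/ b1 <> 0) -> (a2 <> 0 \/ b2 <> 0) -> (A <> 0 \/ B <> 0) ->
  Ln L a1 b1 c1 -> Ln L a2 b2 c2 ->
  ~ same_set (line_eq a1 b1 c1) (line_eq a2 b2 c2) ->
  (forall p, line_eq A B C p -> dist_line a1 b1 c1 p = dist_line a2 b2 c2 p) ->
  Ln L A B C.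
Proof.
  intros [HL [Hi [Hii [Hiii [Hiv Hv]]]]] H1 H2 H3 L1 L2 Hs Hd.
  apply (Hiv a1 b1 c1 a2 b2 c2); auto.
  exists A, B, C; split; auto. intro; tauto.
Qed.

Lemma refl_v' a c z : a <> 0 -> reflect a 0 c z = (2*c/a - fst z, snd z).
Proof. intro Ha; destruct z; unfold reflect; cbn; f_equal; field; auto. Qed.

Ltac leq := let z1 := fresh "z" in let z2 := fresh "z" in
  intros [z1 z2]; unfold line_eq; cbn [fst snd]; split; intro; lra.
Ltac leqr R := let z1 := fresh "z" in let z2 := fresh "z" in
  intros [z1 z2]; rewrite R; unfold line_eq; cbn [fst snd]; split; intro; lra.
Ltac neqp := let E := fresh in intro E; injection E; intros; lra.

Section S.
Variables (P : pset) (L : pset -> Prop).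
Hypotheses (H : origami_pair P L) (HO : P (0,0)) (HE : P (0,1)).

Lemma yax : Ln L 1 0 0.
Proof. apply (thru P L (0,0) (0,1)); cbn; auto; try lra. neqp. Qed.

Lemma boot : Ln L 0 1 0 /\ Ln L 1 (-1) 0 /\ P (1/2, 0).
Proof.
  assert (H1 : Ln L 0 1 (1/2)).
  { eapply Ln_ext. apply (perp P L (0,0) (0,1)); auto. neqp. leq. }
  assert (H2 : P (0, 1/2)). { apply (meet P L 1 0 0 0 1 (1/2)); auto; try lra. apply yax. }
  assert (H3 : Ln L 0 1 (1/4)).
  { eapply Ln_ext. apply (perp P L (0,0) (0,1/2)); auto. neqp. leq. }
  assert (X : Ln L 0 1 0). { apply (refl P L 0 1 (1/4) 0 1 (1/2)); auto. leqr refl_h. }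
  assert (D : Ln L 1 (-1) 0).
  { apply (bis P L 1 0 0 0 1 0); auto; try apply yax.
    - intro Hs. destruct (Hs (0,1)) as [K _]. unfold line_eq in K; cbn in K. lra.
    - intros [p1 p2] Hp. unfold line_eq in Hp; cbn in Hp. unfold dist_line; cbn [fst snd].
      replace (1 * p1 + 0 * p2 - 0) with (0 * p1 + 1 * p2 - 0) by lra.
      replace (1^2 + 0^2) with (0^2 + 1^2) by ring. reflexivity. }
  split; auto; split; auto.
  assert (V : Ln L 1 0 (1/2)). { apply (refl P L 1 (-1) 0 0 1 (1/2)); auto. leqr refl_D. }
  apply (meet P L 1 0 (1/2) 0 1 0); auto; lra.
Qed.

Lemma xax : Ln L 0 1 0. Proof. apply boot. Qed.
Lemma dia : Ln L 1 (-1) 0. Proof. apply boot. Qed.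

Lemma vline x : P (x,0) -> Ln L 1 0 x.
Proof.
  intro Hx. destruct (Req_dec x 0) as [->|Hx0]. apply yax.
  assert (M : Ln L (2*x) 0 (x^2)).
  { eapply Ln_ext. apply (perp P L (0,0) (x,0)); auto. neqp. leq. }
  apply (refl P L (2*x) 0 (x^2) 1 0 0); [auto | left; lra | exact M | apply yax | ].
  intros [z1 z2]. rewrite refl_v' by lra. unfold line_eq; cbn [fst snd].
  replace (2 * x ^ 2 / (2 * x)) with x by (field; auto). split; intro; lra.
Qed.

Lemma kneg x : P (x,0) -> P (-x,0).
Proof.
  intro Hx. assert (V : Ln L 1 0 (-x)).
  { apply (refl P L 1 0 0 1 0 x); auto. apply yax. apply vline; auto. leqr refl_v. }
  apply (meet P L 1 0 (-x) 0 1 0); auto; try lra. apply xax.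
Qed.

Lemma kmid x y : P (x,0) -> P (y,0) -> P ((x+y)/2,0).
Proof.
  intros Hx Hy. destruct (Req_dec x y) as [<-|Hxy].
  - replace ((x+x)/2) with x by field. auto.
  - pose proof (perp P L (x,0) (y,0) H Hx Hy ltac:(neqp)) as M; cbn [fst snd] in M.
    apply (meet P L _ _ _ 0 1 0 _ _ H M xax); try lra.
    all: field.
Qed.

Lemma kadd x y : P (x,0) -> P (y,0) -> P (x+y,0).
Proof.
  intros Hx Hy. pose proof (vline _ (kmid x y Hx Hy)) as Vm.
  assert (V : Ln L 1 0 (x+y)).
  { apply (refl P L 1 0 ((x+y)/2) 1 0 0); auto. apply yax. leqr refl_v. }
  apply (meet P L 1 0 (x+y) 0 1 0); auto; try lra. apply xax.
Qed.

Lemma hline y : P (y,0) -> Ln L 0 1 y.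
Proof.
  intro Hy. apply (refl P L 1 (-1) 0 1 0 y); auto. apply dia. apply vline; auto. leqr refl_D.
Qed.

Lemma kpt a b : P (a,0) -> P (b,0) -> P (a,b).
Proof.
  intros Ha Hb. apply (meet P L 1 0 a 0 1 b); try lra; auto. apply vline; auto. apply hline; auto.
Qed.

Lemma projx a b : P (a,b) -> P (a,0).
Proof.
  intro Hab. destruct (Req_dec b 0) as [->|Hb]; auto.
  destruct (Req_dec a 0) as [->|Ha]; auto.
  assert (L1 : Ln L b (-a) 0). { apply (thru P L (0,0) (a,b)); cbn; auto; try lra. neqp. }
  assert (L2 : Ln L (b-1) (-a) (-a)). { apply (thru P L (0,1) (a,b)); cbn; auto; try lra. neqp. }
  assert (R1 : Ln L b a 0). { apply (refl P L 0 1 0 b (-a) 0); auto. apply xax. leqr refl_h. }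
  assert (R2 : Ln L (b-1) a (-a)). { apply (refl P L 0 1 0 (b-1) (-a) (-a)); auto. apply xax. leqr refl_h. }
  assert (Q : P (a,-b)). { apply (meet P L _ _ _ _ _ _ _ _ H R1 R2); lra. }
  assert (V : Ln L 1 0 a). { apply (thru P L (a,b) (a,-b)); cbn; auto; try lra. neqp. }
  apply (meet P L _ _ _ _ _ _ _ _ H V xax); lra.
Qed.

Lemma swap a b : P (a,b) -> a <> 0 -> P (b,a).
Proof.
  intros Hab Ha.
  assert (L1 : Ln L b (-a) 0). { apply (thru P L (0,0) (a,b)); cbn; auto; try lra. neqp. }
  assert (L2 : Ln L (b-1) (-a) (-a)). { apply (thru P L (0,1) (a,b)); cbn; auto; try lra. neqp. }
  assert (R1 : Ln L (-a) b 0). { apply (refl P L 1 (-1) 0 b (-a) 0); auto. apply dia. leqr refl_D. }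
  assert (R2 : Ln L (-a) (b-1) (-a)). { apply (refl P L 1 (-1) 0 (b-1) (-a) (-a)); auto. apply dia. leqr refl_D. }
  apply (meet P L _ _ _ _ _ _ _ _ H R1 R2); try lra.
Qed.

Lemma kone : P (1,0).
Proof. replace 1 with (1/2 + 1/2) by field. apply kadd; apply boot. Qed.

Lemma projy a b : P (a,b) -> P (b,0).
Proof.
  intro Hab. destruct (Req_dec a 0) as [->|Ha].
  - destruct (Req_dec b 0) as [->|Hb]; auto.
    assert (L1 : Ln L b 1 b). { apply (thru P L (0,b) (1,0)); cbn; auto; try lra. apply kone. neqp. }
    assert (R1 : Ln L 1 b b). { apply (refl P L 1 (-1) 0 b 1 b); auto. apply dia. leqr refl_D. }
    apply (meet P L _ _ _ _ _ _ _ _ H R1 xax); lra.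
  - apply (projx b a). apply swap; auto.
Qed.

Lemma kmul x y : P (x,0) -> P (y,0) -> P (x*y,0).
Proof.
  intros Hx Hy. pose proof (kpt 1 y kone Hy) as Q.
  assert (L1 : Ln L y (-1) 0). { apply (thru P L (0,0) (1,y)); cbn; auto; try lra. neqp. }
  apply (projy x). apply (meet P L _ _ _ _ _ _ _ _ H L1 (vline x Hx)); lra.
Qed.

Lemma kinv x : P (x,0) -> x <> 0 -> P (/x,0).
Proof.
  intros Hx Hx0. pose proof (kpt x 1 Hx kone) as Q.
  assert (L1 : Ln L 1 (-x) 0). { apply (thru P L (0,0) (x,1)); cbn; auto; try lra. neqp. }
  apply (projy 1). apply (meet P L _ _ _ _ _ _ _ _ H L1 (vline 1 kone)); try lra. field; auto.
Qed.

Lemma ksqrt x : P (x,0) -> P (sqrt (1 + x^2), 0).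
Proof.
  intro Hx. destruct (Req_dec x 0) as [->|Hx0].
  { replace (1 + 0^2) with 1 by ring. rewrite sqrt_1. apply kone. }
  set (r := sqrt (1 + x^2)).
  assert (Hr : 1 <= r).
  { unfold r. apply (Rle_trans _ (sqrt 1)); [rewrite sqrt_1; lra|]. apply sqrt_le_1_alt. pose proof (pow2_ge_0 x); lra. }
  assert (Hr2 : r * r = 1 + x^2). { unfold r. apply sqrt_sqrt. pose proof (pow2_ge_0 x); lra. }
  pose proof (kpt 1 x kone Hx) as Q.
  assert (L1 : Ln L x (-1) 0). { apply (thru P L (0,0) (1,x)); cbn; auto; try lra. neqp. }
  assert (B : Ln L x (-(1+r)) 0).
  { apply (bis P L 0 1 0 x (-1) 0); auto; try lra. apply xax.
    - intro Hs. destruct (Hs (1,0)) as [K _]. unfold line_eq in K; cbn in K. lra.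
    - intros [p1 p2] Hp. unfold line_eq in Hp; cbn [fst snd] in Hp. unfold dist_line; cbn [fst snd].
      replace (x * p1 + -1 * p2 - 0) with (r * p2) by lra.
      replace (0 * p1 + 1 * p2 - 0) with p2 by ring.
      replace (0^2 + 1^2) with 1 by ring. rewrite sqrt_1.
      replace (x^2 + (-1)^2) with (1 + x^2) by ring. fold r.
      rewrite Rabs_mult, (Rabs_pos_eq r) by lra. field. lra. }
  assert (T : P (x / (1+r), 0)).
  { apply (projy 1). apply (meet P L _ _ _ _ _ _ _ _ H B (vline 1 kone)); try lra. field. lra. }
  assert (Ht : x / (1+r) <> 0). { intro E. apply Hx0. apply (f_equal (fun u => u * (1+r))) in E.
    field_simplify in E; lra. }
  pose proof (kadd _ _ (kmul _ _ Hx (kinv _ T Ht)) (kneg _ kone)) as F.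
  replace (x * / (x / (1 + r)) + - (1)) with r in F; auto. field. split; lra.
Qed.

Lemma kabs x : P (x,0) -> P (Rabs x, 0).
Proof. intro Hx. destruct (Rcase_abs x); [rewrite Rabs_left|rewrite Rabs_right]; auto; try lra. apply kneg; auto. Qed.

Lemma khyp u w : P (u,0) -> P (w,0) -> P (sqrt (u^2 + w^2), 0).
Proof.
  intros Hu Hw. destruct (Req_dec u 0) as [->|Hu0].
  - replace (0^2 + w^2) with (Rsqr w) by (unfold Rsqr; ring). rewrite sqrt_Rsqr_abs. apply kabs; auto.
  - replace (u^2 + w^2) with (Rsqr u * (1 + (w * / u)^2)) by (unfold Rsqr; field; auto).
    rewrite sqrt_mult. rewrite sqrt_Rsqr_abs. apply kmul. apply kabs; auto.
    apply ksqrt. apply kmul; auto. apply kinv; auto.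
    apply Rle_0_sqr. pose proof (pow2_ge_0 (w * / u)); lra.
Qed.
End S.

Definition G x := P0 (x,0).

Lemma lift1 (f : R -> R) : (forall P L, origami_pair P L -> P (0,0) -> P (0,1) ->
  forall x, P (x,0) -> P (f x, 0)) -> forall x, G x -> G (f x).
Proof. intros K x Hx P HO HE [L HL]. apply (K P L); auto. apply Hx; auto. exists L; auto. Qed.

Lemma lift2 (f : R -> R -> R) : (forall P L, origami_pair P L -> P (0,0) -> P (0,1) ->
  forall x y, P (x,0) -> P (y,0) -> P (f x y, 0)) -> forall x y, G x -> G y -> G (f x y).
Proof. intros K x y Hx Hy P HO HE [L HL]. apply (K P L); auto. apply Hx; auto. exists L; auto.
  apply Hy; auto. exists L; auto. Qed.

Lemma Gadd : forall x y, G x -> G y -> G (x + y).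
Proof. apply (lift2 Rplus). intros; eapply kadd; eauto. Qed.
Lemma Gmul : forall x y, G x -> G y -> G (x * y).
Proof. apply (lift2 Rmult). intros; eapply kmul; eauto. Qed.
Lemma Gneg : forall x, G x -> G (- x).
Proof. apply (lift1 Ropp). intros; eapply kneg; eauto. Qed.
Lemma Gabs : forall x, G x -> G (Rabs x).
Proof. apply (lift1 Rabs). intros; eapply kabs; eauto. Qed.
Lemma Gsqrt : forall x, G x -> G (sqrt (1 + x^2)).
Proof. apply (lift1 (fun x => sqrt (1 + x^2))). intros; eapply ksqrt; eauto. Qed.
Lemma Ghyp : forall x y, G x -> G y -> G (sqrt (x^2 + y^2)).
Proof. apply (lift2 (fun x y => sqrt (x^2 + y^2))). intros; eapply khyp; eauto. Qed.
Lemma Ginv x : G x -> x <> 0 -> G (/ x).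
Proof. intros Hx Hx0 P HO HE [L HL]. eapply kinv; eauto. apply Hx; auto. exists L; auto. Qed.
Lemma G0 : G 0. Proof. intros P HO HE _; auto. Qed.
Lemma G1 : G 1. Proof. intros P HO HE [L HL]. eapply kone; eauto. Qed.

Lemma P0x a b : P0 (a,b) -> G a.
Proof. intros Hp P HO HE [L HL]. eapply projx; eauto. apply Hp; auto. exists L; auto. Qed.
Lemma P0y a b : P0 (a,b) -> G b.
Proof. intros Hp P HO HE [L HL]. eapply projy; eauto. apply Hp; auto. exists L; auto. Qed.

Lemma G_F0 x : G x -> F0 x.
Proof.
  intro Hx. exists (x,0), (0,0). split; auto. split. apply G0.
  unfold Defs.dist; cbn [fst snd].
  replace ((x - 0)^2 + (0 - 0)^2) with (Rsqr x) by (unfold Rsqr; ring).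
  rewrite sqrt_Rsqr_abs. auto.
Qed.

Lemma Gabs_inv x : G (Rabs x) -> G x.
Proof.
  intro H. destruct (Rcase_abs x).
  - rewrite Rabs_left in H by auto. replace x with (- - x) by ring. apply Gneg; auto.
  - rewrite Rabs_right in H; auto.
Qed.

Lemma F0_G x : F0 x -> G x.
Proof.
  intros [[a b] [[c d] [H1 [H2 E]]]]. apply Gabs_inv. rewrite E.
  unfold Defs.dist; cbn [fst snd].
  apply Ghyp; apply Gadd; try apply Gneg.
  eapply P0x; eauto. eapply P0x; eauto. eapply P0y; eauto. eapply P0y; eauto.
Qed.

Theorem mainTheorem3 :
  (* F0 is a subfield of R *)
  (F0 0 /\ F0 1 /\
   (forall x y, F0 x -> F0 y -> F0 (x + y)) /\
   (forall x, F0 x -> F0 (- x)) /\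
   (forall x y, F0 x -> F0 y -> F0 (x * y)) /\
   (forall x, F0 x -> x <> 0 -> F0 (/ x))) /\
  (* closure under alpha |-> sqrt (1 + alpha^2) *)
  (forall alpha, F0 alpha -> F0 (sqrt (1 + alpha ^ 2))).
Proof.
  repeat split; intros; apply G_F0.
  - apply G0.
  - apply G1.
  - apply Gadd; apply F0_G; auto.
  - apply Gneg; apply F0_G; auto.
  - apply Gmul; apply F0_G; auto.
  - apply Ginv; auto; apply F0_G; auto.
  - apply Gsqrt; apply F0_G; auto.
Qed.
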